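(* Let $\Sigma\in\mathbb{R}^{p\times p}$ with $\Sigma\succ0$, $\theta_0\in\mathbb{R}^p$ with $s_0=\|\theta_0\|_0$, $\xi>0$, and let $\widehat\theta^\infty=\widehat\theta^\infty(\xi)$ be the unique minimizer of $\theta\mapsto\frac12\langle\theta-\theta_0,\Sigma(\theta-\theta_0)\rangle+\xi\|\theta\|_1$. Then $$\|\widehat\theta^\infty\|_0\le\Big(1+\frac{4\|\Sigma\|_2}{\kappa(s_0,1)}\Big)s_0.$$
   Context: $\kappa(s,c_0)=\min_{J\subseteq[p],|J|\le s}\ \min_{u\in\mathbb{R}^p,\ \|u_{J^c}\|_1\le c_0\|u_J\|_1}\frac{\langle u,\Sigma u\rangle}{\|u\|_2^2}$; $\|\cdot\|_0$ counts nonzero entries; $\|\Sigma\|_2$ is the spectral norm. *)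

(* Defs.v *)
From mathcomp Require Import all_boot all_order all_algebra.
From mathcomp Require Import boolp classical_sets reals.
Set Implicit Arguments. Unset Strict Implicit. Unset Printing Implicit Defensive.
Import Order.TTheory GRing.Theory Num.Theory.
Local Open Scope ring_scope.
Local Open Scope classical_set_scope.

Section Defs.
Variables (R : realType) (p : nat).

Definition dotv (u v : 'cV[R]_p) : R := \sum_(i < p) u i 0 * v i 0.

Definition quadf (S : 'M[R]_p) (u : 'cV[R]_p) : R := dotv u (S *m u).

Definition l1norm (u : 'cV[R]_p) : R := \sum_(i < p) `|u i 0|.
Definition l1on (J : {set 'I_p}) (u : 'cV[R]_p) : R := \sum_(i in J) `|u i 0|.

Definition l0norm (u : 'cV[R]_p) : nat := #|[set i : 'I_p | u i 0 != 0]|.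

Definition l2norm (u : 'cV[R]_p) : R := Num.sqrt (dotv u u).

Definition specnorm (S : 'M[R]_p) : R :=
  sup [set r : R | exists u : 'cV[R]_p, u != 0 /\ r = l2norm (S *m u) / l2norm u].

Definition kappa (S : 'M[R]_p) (s : nat) (c0 : R) : R :=
  inf [set r : R | exists (J : {set 'I_p}) (u : 'cV[R]_p),
         [/\ (#|J| <= s)%N, u != 0, l1on (~: J) u <= c0 * l1on J u
           & r = quadf S u / dotv u u]].

Definition lasso_obj (S : 'M[R]_p) (theta0 : 'cV[R]_p) (xi : R) (theta : 'cV[R]_p) : R :=
  2^-1 * quadf S (theta - theta0) + xi * l1norm theta.

Definition posdef (S : 'M[R]_p) : Prop :=
  S^T = S /\ forall u : 'cV[R]_p, u != 0 -> 0 < quadf S u.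

End Defs.

(* Main.v *)
Require Import Defs.
From mathcomp Require Import all_boot all_order all_algebra.
From mathcomp Require Import boolp classical_sets reals.
From mathcomp Require Import ring lra.
Import Order.TTheory GRing.Theory Num.Theory.
Local Open Scope ring_scope.

Lemma dotvC {R : realType} {p : nat} (u v : 'cV[R]_p) : dotv u v = dotv v u.
Proof. by apply: eq_bigr => i _; rewrite mulrC. Qed.

Lemma dotvDl {R : realType} {p : nat} (u w v : 'cV[R]_p) :
  dotv (u + w) v = dotv u v + dotv w v.
Proof. rewrite /dotv -big_split; apply: eq_bigr => i _; by rewrite mxE mulrDl. Qed.

Lemma dotvZl {R : realType} {p : nat} (a : R) (u v : 'cV[R]_p) :
  dotv (a *: u) v = a * dotv u v.
Proof. rewrite /dotv mulr_sumr; apply: eq_bigr => i _; by rewrite mxE mulrA. Qed.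

Lemma dotvDr {R : realType} {p : nat} (u w v : 'cV[R]_p) :
  dotv v (u + w) = dotv v u + dotv v w.
Proof. by rewrite dotvC dotvDl !(dotvC v). Qed.

Lemma dotvZr {R : realType} {p : nat} (a : R) (u v : 'cV[R]_p) :
  dotv v (a *: u) = a * dotv v u.
Proof. by rewrite dotvC dotvZl dotvC. Qed.

Lemma dotv0r {R : realType} {p : nat} (v : 'cV[R]_p) : dotv v 0 = 0.
Proof. rewrite /dotv big1 // => i _; by rewrite mxE mulr0. Qed.

Lemma dotv_ge0 {R : realType} {p : nat} (v : 'cV[R]_p) : 0 <= dotv v v.
Proof. apply: sumr_ge0 => i _; by rewrite -expr2 sqr_ge0. Qed.

Lemma dotv_eq0 {R : realType} {p : nat} (v : 'cV[R]_p) : dotv v v = 0 -> v = 0.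
Proof.
move=> H; apply/matrixP => i j; rewrite (ord1 j) [RHS]mxE.
have H0 : forall k : 'I_p, xpredT k -> 0 <= v k 0 * v k 0.
  by move=> k _; rewrite -expr2 sqr_ge0.
have := @psumr_eq0P R _ xpredT (fun i => v i 0 * v i 0) H0 H i isT.
by move=> /eqP; rewrite mulf_eq0 orbb => /eqP.
Qed.

Lemma dotv_mulmx {R : realType} {p : nat} (S : 'M[R]_p) (u v : 'cV[R]_p) :
  dotv u (S *m v) = dotv (S^T *m u) v.
Proof.
rewrite /dotv.
under eq_bigr => i _ do rewrite mxE big_distrr /=.
rewrite exchange_big /=; apply: eq_bigr => j _.
rewrite mxE big_distrl /=; apply: eq_bigr => i _.
by rewrite mxE; ring.
Qed.

Lemma discr {R : realType} (a b c : R) : 0 <= c ->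
  (forall t, 0 <= a + 2 * t * b + t ^+ 2 * c) -> b ^+ 2 <= a * c.
Proof.
move=> c0 H.
have a0 : 0 <= a by have := H 0; rewrite !(mulr0,mul0r,expr0n) /= !addr0.
have [cgt0|] := ltrP 0 c.
  have := H (- b / c).
  have -> : a + 2 * (- b / c) * b + (- b / c) ^+ 2 * c = a - b ^+ 2 / c.
    by field; rewrite gt_eqF.
  rewrite subr_ge0 ler_pdivrMr //.
move=> cle0; have c00 : c = 0 by apply/eqP; rewrite eq_le cle0 c0.
subst c; rewrite mulr0.
have [b0|bn0] := eqVneq b 0; first by rewrite b0 expr0n.
have := H (- (a + 1) / (2 * b)).
have -> : a + 2 * (- (a + 1) / (2 * b)) * b + (- (a + 1) / (2 * b)) ^+ 2 * 0 = -1.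
  by field; rewrite bn0.
by rewrite oppr_ge0 ler10.
Qed.

Lemma quad_expand {R : realType} {p : nat} (S : 'M[R]_p) (x y : 'cV[R]_p) (t : R) :
  S^T = S ->
  quadf S (x + t *: y) = quadf S x + 2 * t * dotv x (S *m y) + t ^+ 2 * quadf S y.
Proof.
move=> St; rewrite /quadf mulmxDr -scalemxAr !(dotvDl, dotvDr, dotvZl, dotvZr).
have -> : dotv y (S *m x) = dotv x (S *m y) by rewrite dotv_mulmx St dotvC.
ring.
Qed.

Lemma cs_psd {R : realType} {p : nat} (S : 'M[R]_p) (x y : 'cV[R]_p) :
  S^T = S -> (forall u, 0 <= quadf S u) ->
  (dotv x (S *m y)) ^+ 2 <= quadf S x * quadf S y.
Proof.
move=> St Hp; apply: discr => // t; rewrite -quad_expand //.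
Qed.

Lemma cs_std {R : realType} {p : nat} (x y : 'cV[R]_p) :
  (dotv x y) ^+ 2 <= dotv x x * dotv y y.
Proof.
have Hp : forall u : 'cV[R]_p, 0 <= quadf 1%:M u.
  by move=> u; rewrite /quadf mul1mx dotv_ge0.
have := @cs_psd R p 1%:M x y (trmx1 _ _) Hp.
by rewrite /quadf !mul1mx.
Qed.

Definition frob {R : realType} {p : nat} (A : 'M[R]_p) : R :=
  \sum_(i < p) \sum_(j < p) A i j * A i j.

Lemma frob_ge0 {R : realType} {p : nat} (A : 'M[R]_p) : 0 <= frob A.
Proof. apply: sumr_ge0 => i _; apply: sumr_ge0 => j _; by rewrite -expr2 sqr_ge0. Qed.

Lemma frob_bound {R : realType} {p : nat} (A : 'M[R]_p) (u : 'cV[R]_p) :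
  dotv (A *m u) (A *m u) <= frob A * dotv u u.
Proof.
rewrite /frob big_distrl /=; apply: ler_sum => i _.
pose r : 'cV[R]_p := (row i A)^T.
have E1 : (A *m u) i 0 = dotv r u.
  by rewrite mxE; apply: eq_bigr => j _; rewrite !mxE.
have E2 : \sum_(j < p) A i j * A i j = dotv r r.
  by apply: eq_bigr => j _; rewrite !mxE.
by rewrite E1 E2 -expr2 cs_std.
Qed.

Lemma dotv_gt0 {R : realType} {p : nat} (u : 'cV[R]_p) : u != 0 -> 0 < dotv u u.
Proof.
move=> un; rewrite lt_neqAle dotv_ge0 andbT eq_sym.
by apply/eqP => /dotv_eq0 h; move: un; rewrite h eqxx.
Qed.

Lemma ratio_bound {R : realType} {p : nat} (A : 'M[R]_p) (u : 'cV[R]_p) :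
  u != 0 -> l2norm (A *m u) / l2norm u <= 1 + frob A.
Proof.
move=> un; have d0 := dotv_gt0 u un.
have b0 : 0 < l2norm u by rewrite /l2norm sqrtr_gt0.
rewrite ler_pdivrMr //.
have := frob_bound A u; have F0 := frob_ge0 A.
have ha : l2norm (A *m u) ^+ 2 = dotv (A *m u) (A *m u) by rewrite sqr_sqrtr // dotv_ge0.
have hb : l2norm u ^+ 2 = dotv u u by rewrite sqr_sqrtr // dotv_ge0.
have a0 : 0 <= l2norm (A *m u) by apply: sqrtr_ge0.
rewrite -ha -hb => h.
set a := l2norm (A *m u) in a0 h *; set b := l2norm u in b0 h *; set F := frob A in F0 h *.
have h2 : a ^+ 2 <= ((1 + F) * b) ^+ 2 by nra.
rewrite -(ler_pXn2r (_ : (0 < 2)%N)) //.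
all: try rewrite nnegrE.
all: try nra.
all: idtac.
Qed.

Lemma specnorm_ub {R : realType} {p : nat} (A : 'M[R]_p) (u : 'cV[R]_p) :
  u != 0 -> l2norm (A *m u) / l2norm u <= specnorm A.
Proof.
move=> un; apply: ub_le_sup.
  by exists (1 + frob A) => r [v [vn ->]]; apply: ratio_bound.
by exists u.
Qed.

Lemma kkt_core {R : realType} (a b c xi : R) : 0 < b -> 0 <= c ->
  (forall s, 0 < s -> s < b -> 0 <= - s * a + s ^+ 2 * c / 2 - xi * s) ->
  a <= - xi.
Proof.
move=> b0 c0 H; rewrite leNgt; apply/negP => dpos'.
have dpos : 0 < a + xi by lra.
set d := a + xi in dpos.
have c1 : 0 < c + 1 by lra.
set s := Num.min (b / 2) (d / (c + 1)).
have : s <= s by [].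
rewrite {2}/s le_min => /andP [sb sd].
have s0 : 0 < s by rewrite /s lt_min !divr_gt0.
have sb' : s < b by lra.
have hs := H s s0 sb'.
have sd' : s * c + s <= d.
  by move: sd; rewrite ler_pdivlMr // mulrDr mulr1.
have : d * s <= s ^+ 2 * c / 2 by rewrite /d; lra.
nra.
Qed.

Lemma kkt_real {R : realType} (a b c xi : R) : b != 0 -> 0 < xi -> 0 <= c ->
  (forall t, 0 <= t * a + t ^+ 2 * c / 2 + xi * (`|b + t| - `|b|)) ->
  xi ^+ 2 <= a ^+ 2.
Proof.
move=> bn x0 c0 H.
have [bpos|bneg] := ltrP 0 b.
  have : a <= - xi.
    apply: (@kkt_core _ _ _ _ _ bpos c0) => s s0 sb.
    have := H (- s); rewrite (gtr0_norm bpos) ger0_norm; last by lra.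
    have -> : (- s) ^+ 2 = s ^+ 2 by rewrite sqrrN.
    lra.
  nra.
have bneg' : b < 0 by rewrite lt_neqAle bn bneg.
have : - a <= - xi.
  have bpos : 0 < - b by rewrite oppr_gt0.
  apply: (@kkt_core _ _ _ _ _ bpos c0) => s s0 sb.
  have := H s; rewrite (ltr0_norm bneg') ler0_norm; last by lra.
  lra.
nra.
Qed.

Lemma dotv_delta {R : realType} {p : nat} (w : 'cV[R]_p) (i : 'I_p) :
  dotv w (delta_mx i 0) = w i 0.
Proof.
rewrite /dotv (bigD1 i) //= big1 ?addr0; first by rewrite mxE !eqxx mulr1.
by move=> j ji; rewrite mxE (negbTE ji) mulr0.
Qed.

Lemma l1_pert {R : realType} {p : nat} (th : 'cV[R]_p) (i : 'I_p) (t : R) :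
  l1norm (th + t *: delta_mx i 0) = l1norm th + (`|th i 0 + t| - `|th i 0|).
Proof.
rewrite /l1norm (bigD1 i) //= [in RHS](bigD1 i) //=.
have -> : \sum_(j < p | j != i) `|(th + t *: delta_mx i 0) j 0|
        = \sum_(j < p | j != i) `|th j 0|.
  by apply: eq_bigr => j ji; rewrite !mxE (negbTE ji) mulr0 addr0.
rewrite !mxE !eqxx mulr1; lra.
Qed.

Lemma kkt {R : realType} {p : nat} (S : 'M[R]_p) (th0 th : 'cV[R]_p) (xi : R) (i : 'I_p) :
  S^T = S -> (forall u, 0 <= quadf S u) -> 0 < xi ->
  (forall theta, lasso_obj S th0 xi th <= lasso_obj S th0 xi theta) ->
  th i 0 != 0 -> xi ^+ 2 <= ((S *m (th - th0)) i 0) ^+ 2.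
Proof.
move=> St Hp x0 Hmin bn.
apply: (@kkt_real _ _ _ (quadf S (delta_mx i 0)) _ bn x0 (Hp _)) => t.
have := Hmin (th + t *: delta_mx i 0).
rewrite /lasso_obj l1_pert.
have -> : th + t *: delta_mx i 0 - th0 = (th - th0) + t *: delta_mx i 0.
  by rewrite addrAC.
rewrite quad_expand // dotv_mulmx St dotv_delta.
set q := quadf S (th - th0).
lra.
Qed.

Lemma sq_le_bound {R : realType} (x F D : R) : 0 <= F -> 0 <= D ->
  x ^+ 2 <= F * D ^+ 2 -> x <= (1 + F) * D.
Proof.
move=> F0 D0 h; have [xle|xgt] := lerP x 0.
  by apply: (le_trans xle); rewrite mulr_ge0 // addr_ge0.
rewrite -(ler_pXn2r (_ : (0 < 2)%N)) //; last by rewrite nnegrE mulr_ge0 // addr_ge0.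
  nra.
by rewrite nnegrE ltW.
Qed.

Lemma pd_unit {R : realType} {p : nat} (S : 'M[R]_p) : posdef S -> S \in unitmx.
Proof.
move=> [St Hpd]; rewrite unitmxE unitfE; apply/negP => /det0P [v vn vS].
have un : v^T != 0.
  by apply: contra vn => /eqP h; rewrite -[v]trmxK h trmx0.
have := Hpd _ un; rewrite /quadf.
have -> : S *m v^T = 0 by rewrite -{1}St -trmx_mul vS trmx0.
by rewrite dotv0r ltxx.
Qed.

Lemma pd_lower {R : realType} {p : nat} (S : 'M[R]_p) : posdef S ->
  exists2 c : R, 0 < c & forall u, u != 0 -> c <= quadf S u / dotv u u.
Proof.
move=> Hpd; have Su := pd_unit S Hpd; case: Hpd => St Hpd.
have Hp : forall u, 0 <= quadf S u.
  move=> u; have [->|un] := eqVneq u 0; first by rewrite /quadf mulmx0 dotv0r.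
  by apply: ltW; apply: Hpd.
set W := invmx S; set F := frob W.
have F0 : 0 <= F by apply: frob_ge0.
exists (1 + F)^-1; first by rewrite invr_gt0; lra.
move=> u un; have d0 := dotv_gt0 u un.
have E : S *m (W *m u) = u by rewrite mulmxA mulmxV // mul1mx.
have h1 : dotv u u = dotv u (S *m (W *m u)) by rewrite E.
have h2 := cs_psd S u (W *m u) St Hp.
have h3 : quadf S (W *m u) = dotv (W *m u) u by rewrite /quadf E.
have h4 := cs_std (W *m u) u.
have h5 := frob_bound W u.
have h6 : quadf S (W *m u) <= (1 + F) * dotv u u.
  apply: sq_le_bound => //; first by apply: dotv_ge0.
  rewrite h3; apply: (le_trans h4); rewrite expr2 mulrA ler_wpM2r //; first by apply: dotv_ge0.
rewrite -h1 in h2.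
have hq := Hp u.
rewrite ler_pdivlMr // mulrC ler_pdivrMr; last by lra.
set d := dotv u u in d0 h2 h6 *; set q := quadf S u in hq h2 *.
set qw := quadf S (W *m u) in h2 h6.
have : d ^+ 2 <= q * ((1 + F) * d) by apply: (le_trans h2); apply: ler_wpM2l.
nra.
Qed.

Lemma l0E {R : realType} {p : nat} (u : 'cV[R]_p) :
  l0norm u = #|[set i : 'I_p | u i 0 != 0]|.
Proof.
apply: eq_card => i; rewrite inE; apply/idP/idP.
  by move/set_mem.
by move=> h; apply: mem_set.
Qed.

Lemma sq_le {R : realType} (x y : R) : 0 <= y -> x ^+ 2 <= y ^+ 2 -> x <= y.
Proof.
move=> y0 h; have [xle|xgt] := lerP x 0; first by apply: le_trans xle y0.
by rewrite -(ler_pXn2r (_ : (0 < 2)%N)) // nnegrE ltW.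
Qed.

Lemma l2sq {R : realType} {p : nat} (u : 'cV[R]_p) : l2norm u ^+ 2 = dotv u u.
Proof. by rewrite sqr_sqrtr // dotv_ge0. Qed.

Lemma l1split {R : realType} {p : nat} (J : {set 'I_p}) (u : 'cV[R]_p) :
  l1norm u = l1on J u + l1on (~: J) u.
Proof.
rewrite /l1norm (bigID (mem J)) /=; congr (_ + _).
by apply: eq_bigl => i; rewrite finset.in_setC.
Qed.

Lemma l1on_ge0 {R : realType} {p : nat} (J : {set 'I_p}) (u : 'cV[R]_p) : 0 <= l1on J u.
Proof. by apply: sumr_ge0 => i _; apply: normr_ge0. Qed.


Theorem lemma3p1 (R : realType) (p : nat) (Sigma : 'M[R]_p) (theta0 : 'cV[R]_p)
  (xi : R) (thetahat : 'cV[R]_p) :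
  posdef Sigma -> 0 < xi ->
  (forall theta : 'cV[R]_p,
     lasso_obj Sigma theta0 xi thetahat <= lasso_obj Sigma theta0 xi theta) ->
  (l0norm thetahat)%:R
    <= (1 + 4 * specnorm Sigma / kappa Sigma (l0norm theta0) 1) * (l0norm theta0)%:R.
Proof.
move=> Hpd x0 Hmin.
have [c c0 Hc] := pd_lower Sigma Hpd.
case: Hpd => St Hpd.
have Hp : forall u, 0 <= quadf Sigma u.
  move=> u; have [->|un] := eqVneq u 0; first by rewrite /quadf mulmx0 dotv0r.
  by apply: ltW; apply: Hpd.
set D0 := thetahat - theta0.
have [DZ|Dn] := eqVneq D0 0.
  have eth : thetahat = theta0 by apply/eqP; rewrite -subr_eq0; apply/eqP.
  have m0 : l0norm thetahat = 0%N.
    rewrite l0E; apply/eqP; rewrite cards_eq0; apply/eqP/setP => i.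
    rewrite !inE; apply/negP => /negP hi.
    have := kkt Sigma theta0 thetahat xi i St Hp x0 Hmin hi; rewrite -/D0 DZ mulmx0 mxE expr0n /=.
    by rewrite leNgt exprn_gt0.
  by rewrite -eth m0 mulr0.
set J := [set i : 'I_p | theta0 i 0 != 0].
have s0E : l0norm theta0 = #|J| by rewrite l0E.
set SD := Sigma *m D0.
have Q0 : 0 < quadf Sigma D0 by apply: Hpd.
have D0p : 0 < dotv D0 D0 by apply: dotv_gt0.
have SDn : SD != 0.
  by apply: contraTneq Q0 => h; rewrite /quadf -/SD h dotv0r ltxx.
set Q := quadf Sigma D0.
set P := specnorm Sigma.
set K := kappa Sigma (l0norm theta0) 1.
set m := l0norm thetahat.
set N := dotv SD SD.
have N0 : 0 < N by apply: dotv_gt0.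
have ha : m%:R * xi ^+ 2 <= N.
  rewrite /m l0E mulr_natl -sumr_const.
  apply: (@le_trans _ _ (\sum_(i in [set i : 'I_p | thetahat i 0 != 0]) (SD i 0) ^+ 2)).
    apply: ler_sum => i; rewrite inE => hi.
    exact: (kkt Sigma theta0 thetahat xi i St Hp x0 Hmin hi).
  rewrite /N /dotv [X in _ <= X](bigID (fun i => i \in [set i : 'I_p | thetahat i 0 != 0])) /=.
  rewrite -[X in X <= _]addr0 lerD //.
  by apply: sumr_ge0 => i _; rewrite -expr2 sqr_ge0.

have hN1 : N = dotv D0 (Sigma *m SD) by rewrite dotv_mulmx St.
have hN2 := cs_psd Sigma D0 SD St Hp.
rewrite -hN1 -/Q in hN2.
have lSD : 0 < l2norm SD by rewrite /l2norm sqrtr_gt0.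
have hr := specnorm_ub Sigma SD SDn; rewrite -/P in hr.
have P0 : 0 <= P by apply: le_trans hr; rewrite divr_ge0 // sqrtr_ge0.
rewrite ler_pdivrMr // in hr.
have hd : dotv (Sigma *m SD) (Sigma *m SD) <= P ^+ 2 * N.
  rewrite -l2sq /N -l2sq -exprMn; apply: lerXn2r => //; rewrite nnegrE ?sqrtr_ge0 //.
  by rewrite mulr_ge0 // ltW.
have hq : quadf Sigma SD <= P * N.
  apply: sq_le; first by rewrite mulr_ge0 // ltW.
  apply: (le_trans (cs_std SD (Sigma *m SD))); rewrite -/N.
  have h := ler_wpM2l (ltW N0) hd.
  apply: le_trans h _; rewrite le_eqVlt; apply/orP; left; apply/eqP; ring.
have hb : N <= P * Q.
  have : N ^+ 2 <= Q * (P * N).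
    by apply: (le_trans hN2); apply: ler_wpM2l => //; apply: ltW.
  nra.
set LJ := l1on J D0. set LJc := l1on (~: J) D0.
have hc : Q <= 2 * xi * (LJ - LJc).
  have := Hmin theta0; rewrite /lasso_obj subrr /quadf mulmx0 dotv0r mulr0 add0r.
  rewrite -/D0 -/(quadf Sigma D0) -/Q (l1split J thetahat) (l1split J theta0).
  have e1 : l1on (~: J) theta0 = 0.
    by apply: big1 => i; rewrite finset.in_setC inE negbK => /eqP ->; rewrite normr0.
  have e2 : l1on (~: J) thetahat = LJc.
    by apply: eq_bigr => i; rewrite finset.in_setC inE negbK => /eqP h; rewrite /D0 !mxE h subr0.
  have e3 : l1on J theta0 - l1on J thetahat <= LJ.
    rewrite /l1on -sumrB; apply: ler_sum => i _.
    by rewrite /D0 !mxE distrC lerB_dist.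
  rewrite e1 e2 => h.
  have : xi * (l1on J theta0 - l1on J thetahat) <= xi * LJ by rewrite ler_wpM2l // ltW.
  lra.
have hcone : LJc <= 1 * LJ.
  rewrite mul1r; have := ltW Q0; rewrite -/Q => q0.
  have : 0 <= 2 * xi * (LJ - LJc) by apply: le_trans q0 hc.
  rewrite pmulr_rge0 ?subr_ge0 // mulr_gt0 //.
have hmem : [set r : R | exists (J0 : {set 'I_p}) (u : 'cV[R]_p),
         [/\ (#|J0| <= l0norm theta0)%N, u != 0, l1on (~: J0) u <= 1 * l1on J0 u
           & r = quadf Sigma u / dotv u u]]%classic (Q / dotv D0 D0).
  by exists J, D0; split => //; rewrite s0E.
have hK1 : K <= Q / dotv D0 D0.
  apply: (ge_inf _ hmem); exists 0 => r [J0 [u [_ _ _ ->]]].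
  by rewrite divr_ge0 // dotv_ge0.
have hK0 : c <= K.
  apply: lb_le_inf; first by exists (Q / dotv D0 D0).
  by move=> r [J0 [u [_ un _ ->]]]; apply: Hc.
set s0 := (l0norm theta0)%:R.
set D := dotv D0 D0.
have hg : LJ ^+ 2 <= s0 * D.
  pose v : 'cV[R]_p := \col_i (if i \in J then 1 else 0).
  pose w : 'cV[R]_p := \col_i (if i \in J then `|D0 i 0| else 0).
  have ev : dotv v w = LJ.
    rewrite /LJ /l1on /dotv [RHS]big_mkcond /=; apply: eq_bigr => i _.
    by rewrite !mxE; case: ifP => _; rewrite ?mul1r ?mul0r.
  have evv : dotv v v = s0.
    rewrite /s0 s0E /dotv -sumr_const [RHS]big_mkcond /=; apply: eq_bigr => i _.
    by rewrite !mxE; case: ifP => _; rewrite ?mul1r ?mul0r.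
  have eww : dotv w w <= D.
    apply: ler_sum => i _; rewrite !mxE; case: ifP => _.
      by rewrite -normrM ger0_norm // -expr2 sqr_ge0.
    by rewrite mul0r -expr2 sqr_ge0.
  have := cs_std v w; rewrite ev evv => h; apply: le_trans h _.
  by apply: ler_wpM2l => //; rewrite /s0 ler0n.
have LJc0 : 0 <= LJc by apply: l1on_ge0.
have LJ0 : 0 <= LJ by apply: l1on_ge0.
have s00 : 0 <= s0 by rewrite /s0 ler0n.
have Dp : 0 < D by [].
have Kp : 0 < K by apply: lt_le_trans hK0.
have hK2 : K * D <= Q by rewrite -ler_pdivlMr.
have hQ1 : Q <= 2 * xi * LJ.
  have : 0 <= xi * LJc by rewrite mulr_ge0 // ltW.
  lra.
have hQ2 : Q ^+ 2 <= 4 * xi ^+ 2 * (s0 * D).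
  have q0 : 0 <= Q by apply: ltW.
  have h1 : Q ^+ 2 <= (2 * xi * LJ) ^+ 2 by rewrite expr2 [X in _ <= X]expr2; nra.
  apply: (le_trans h1); rewrite exprMn [(2 * xi) ^+ 2]exprMn.
  have : 4 * xi ^+ 2 * LJ ^+ 2 <= 4 * xi ^+ 2 * (s0 * D).
    by apply: ler_wpM2l => //; rewrite mulr_ge0 // sqr_ge0.
  have -> : (2:R) ^+ 2 = 4 by rewrite expr2; lra.
  by [].
have hQK : Q * K <= 4 * xi ^+ 2 * s0.
  have : Q ^+ 2 * K <= 4 * xi ^+ 2 * s0 * Q.
    apply: (le_trans (ler_wpM2r (ltW Kp) hQ2)).
    have : 4 * xi ^+ 2 * s0 * (K * D) <= 4 * xi ^+ 2 * s0 * Q.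
      by apply: ler_wpM2l => //; rewrite mulr_ge0 // mulr_ge0 // sqr_ge0.
    lra.
  nra.
have m0 : 0 <= m%:R :> R by rewrite ler0n.
have hmK : m%:R * K <= 4 * P * s0.
  have : m%:R * xi ^+ 2 * K <= 4 * P * s0 * xi ^+ 2.
    have h1 : m%:R * xi ^+ 2 * K <= P * Q * K by apply: ler_wpM2r; [exact: ltW | exact: le_trans ha hb].
    apply: (le_trans h1).
    have : P * (Q * K) <= P * (4 * xi ^+ 2 * s0) by apply: ler_wpM2l.
    lra.
  have x2 : 0 < xi ^+ 2 by rewrite exprn_gt0.
  nra.
have hm : m%:R <= 4 * P / K * s0.
  by rewrite mulrAC ler_pdivlMr.
apply: (le_trans hm); apply: ler_wpM2r => //; lra.
Qed.
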